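(* Let $q\in\mathbb{C}\setminus\{0\}$ be not a root of unity, and let $\pi$ be a $U_q(\mathfrak{sl}_2)$-module algebra structure on $\mathbb{C}_q[x^{\pm1},y^{\pm1}]$ such that $\pi(\mathsf{k})(x)=\alpha x$, $\pi(\mathsf{k})(y)=\beta y$ with $\alpha,\beta\in\mathbb{C}\setminus\{0\}$, and write (finite sums) $$\pi(\mathsf{e})(x)=\sum_{i,j}a_{i,j}x^iy^j,\quad \pi(\mathsf{e})(y)=\sum_{i,j}b_{i,j}x^iy^j,\quad \pi(\mathsf{f})(x)=\sum_{i,j}c_{i,j}x^iy^j,\quad \pi(\mathsf{f})(y)=\sum_{i,j}d_{i,j}x^iy^j,$$ with $a_{i,j},b_{i,j},c_{i,j},d_{i,j}\in\mathbb{C}$. Then for all $i,j\in\mathbb{Z}$, $$a_{i+1,j}(q^i-\beta)=b_{i,j+1}(1-\alpha q^j),\qquad c_{i+1,j}(1-\beta^{-1}q^i)=d_{i,j+1}(q^j-\alpha^{-1}).$$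
   Context: $\mathbb{C}_q[x^{\pm1},y^{\pm1}]$ is the unital algebra generated by $x,y,x^{-1},y^{-1}$ with relations $yx=qxy$, $xx^{-1}=x^{-1}x=yy^{-1}=y^{-1}y=\mathbf{1}$; the monomials $x^iy^j$, $i,j\in\mathbb{Z}$, form a basis. $U_q(\mathfrak{sl}_2)$ is the unital algebra generated by $\mathsf{k},\mathsf{k}^{-1},\mathsf{e},\mathsf{f}$ with relations $\mathsf{k}\mathsf{k}^{-1}=\mathsf{k}^{-1}\mathsf{k}=\mathbf{1}$, $\mathsf{k}\mathsf{e}=q^2\mathsf{e}\mathsf{k}$, $\mathsf{k}\mathsf{f}=q^{-2}\mathsf{f}\mathsf{k}$, $\mathsf{e}\mathsf{f}-\mathsf{f}\mathsf{e}=\frac{\mathsf{k}-\mathsf{k}^{-1}}{q-q^{-1}}$, with Hopf structure $\Delta(\mathsf{k})=\mathsf{k}\otimes\mathsf{k}$, $\Delta(\mathsf{e})=\mathbf{1}\otimes\mathsf{e}+\mathsf{e}\otimes\mathsf{k}$, $\Delta(\mathsf{f})=\mathsf{f}\otimes\mathbf{1}+\mathsf{k}^{-1}\otimes\mathsf{f}$, $\varepsilon(\mathsf{k})=1$, $\varepsilon(\mathsf{e})=\varepsilon(\mathsf{f})=0$. A $U_q(\mathfrak{sl}_2)$-module algebra structure on a unital algebra $A$ is an algebra homomorphism $\pi:U_q(\mathfrak{sl}_2)\to\operatorname{End}_\mathbb{C}A$ with $\pi(h)(ab)=\sum_i\pi(h_i')(a)\pi(h_i'')(b)$ (where $\Delta(h)=\sum_i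 h_i'\otimes h_i''$) and $\pi(h)(\mathbf{1})=\varepsilon(h)\mathbf{1}$. *)

(* Defs.v *)
From mathcomp Require Import all_boot all_order all_algebra.
From mathcomp Require Import complex.
From mathcomp Require Import Rstruct.
Set Implicit Arguments. Unset Strict Implicit. Unset Printing Implicit Defensive.
Import Order.TTheory GRing.Theory Num.Theory.
Local Open Scope ring_scope.

Definition C : fieldType := complex Rdefinitions.R.

Section QTorus.
Variable A : algType C.

(* u^i for i : int, where uinv is the (two-sided) inverse of u. *)
Definition zpow (u uinv : A) (i : int) : A :=
  match i with Posz n => u ^+ n | Negz n => uinv ^+ n.+1 end.

Definition mono (x xi y yi : A) (i j : int) : A := zpow x xi i * zpow y yi j.

(* A (with distinguished x, x^-1, y, y^-1) is the quantum torus C_q[x^{±1},y^{±1}]: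
   the defining relations hold and the monomials x^i y^j form a C-basis. *)
Definition is_quantum_torus (q : C) (x xi y yi : A) : Prop :=
  [/\ y * x = q *: (x * y), x * xi = 1 /\ xi * x = 1, y * yi = 1 /\ yi * y = 1,
      (forall (s : seq (int * int)) (c : int * int -> C), uniq s ->
         \sum_(p <- s) c p *: mono x xi y yi p.1 p.2 = 0 ->
         forall p, p \in s -> c p = 0)
    &
      (forall v : A, exists (s : seq (int * int)) (c : int * int -> C),
         v = \sum_(p <- s) c p *: mono x xi y yi p.1 p.2)].

(* An algebra homomorphism U_q(sl_2) -> End_C A is the same as four linear maps
   K = pi(k), Ki = pi(k^-1), E = pi(e), F = pi(f) satisfying the defining
   relations of U_q(sl_2); the module-algebra conditions are imposed on the
   generators (equivalent to imposing them for all h, since Delta and epsilon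
   are algebra maps). *)
Definition is_Uq_module_algebra (q : C) (K Ki E F : A -> A) : Prop :=
  [/\
      [/\ (forall v, K (Ki v) = v), (forall v, Ki (K v) = v),
      (forall v, K (E v) = q ^+ 2 *: E (K v)),
      (forall v, K (F v) = q ^- 2 *: F (K v))
      & (forall v, E (F v) - F (E v) = (q - q^-1)^-1 *: (K v - Ki v))],
      (forall u v, K (u * v) = K u * K v) /\ (forall u v, Ki (u * v) = Ki u * Ki v),
      (forall u v, E (u * v) = u * E v + E u * K v) /\
      (forall u v, F (u * v) = F u * v + Ki u * F v)
    &
      [/\ K 1 = 1, Ki 1 = 1, E 1 = 0 & F 1 = 0]].

Definition expansion (x xi y yi : A) (S : seq (int * int)) (a : int -> int -> C)
    (v : A) : Prop :=
  [/\ uniq S, (forall i j, (i, j) \notin S -> a i j = 0)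
    & v = \sum_(p <- S) a p.1 p.2 *: mono x xi y yi p.1 p.2].

End QTorus.

(* Main.v *)
Require Import Defs.
From mathcomp Require Import all_boot all_order all_algebra.
From mathcomp Require Import complex.
From mathcomp Require Import Rstruct.
From mathcomp Require Import zify ring.
Import Order.TTheory GRing.Theory Num.Theory.
Local Open Scope ring_scope.

Section Helpers.
Variable A : algType C.

Lemma zpowS (u ui : A) : u * ui = 1 -> ui * u = 1 -> forall i : int,
  zpow u ui (i + 1) = zpow u ui i * u /\ zpow u ui (i + 1) = u * zpow u ui i.
Proof.
move=> h1 h2 [n|n].
  rewrite (_ : Posz n + 1 = Posz n.+1); last by lia.
  by rewrite /=; split; [rewrite exprSr | rewrite exprS].
case: n => [|m].
  rewrite (_ : Negz 0 + 1 = Posz 0); last by rewrite NegzE; lia.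
  by rewrite /= expr1 expr0.
rewrite (_ : Negz m.+1 + 1 = Negz m); last by rewrite !NegzE; lia.
rewrite /=; split.
  by rewrite [ui ^+ m.+2]exprSr -mulrA h2 mulr1.
by rewrite [ui ^+ m.+2]exprS mulrA h1 mul1r.
Qed.

Lemma mulcommL (u z z' : A) (s s' : C) :
  u * z = s *: (z * u) -> u * z' = s' *: (z' * u) ->
  u * (z * z') = (s * s') *: (z * z' * u).
Proof.
move=> h h'; rewrite mulrA h -scalerAl -(mulrA z u z') h' -scalerAr scalerA.
by rewrite !mulrA.
Qed.

Lemma mulcommR (u z z' : A) (s s' : C) :
  z * u = s *: (u * z) -> z' * u = s' *: (u * z') ->
  (z * z') * u = (s * s') *: (u * (z * z')).
Proof.
move=> h h'; rewrite -mulrA h' -scalerAr (mulrA z u z') h -scalerAl scalerA.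
by rewrite !mulrA [s' * s]mulrC.
Qed.

Lemma powcommL (u z : A) s : u * z = s *: (z * u) ->
  forall n, u * z ^+ n = s ^+ n *: (z ^+ n * u).
Proof.
move=> h; elim=> [|n IH]; first by rewrite !expr0 mulr1 mul1r scale1r.
by rewrite !exprS; exact: mulcommL h IH.
Qed.

Lemma powcommR (u z : A) s : z * u = s *: (u * z) ->
  forall n, z ^+ n * u = s ^+ n *: (u * z ^+ n).
Proof.
move=> h; elim=> [|n IH]; first by rewrite !expr0 mulr1 mul1r scale1r.
by rewrite !exprS; exact: mulcommR h IH.
Qed.

Lemma comm_zpowL (u w wi : A) (r : C) : w * wi = 1 -> wi * w = 1 -> r != 0 ->
  u * w = r *: (w * u) -> forall i, u * zpow w wi i = r ^ i *: (zpow w wi i * u).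
Proof.
move=> h1 h2 hr h.
have hi : u * wi = r^-1 *: (wi * u).
  have e : wi * u = r *: (u * wi).
    transitivity (wi * (u * w) * wi).
      by rewrite -!mulrA h1 mulr1.
    by rewrite h -scalerAr -scalerAl !mulrA h2 mul1r.
  by rewrite e scalerA mulVf // scale1r.
case=> n /=.
  exact: powcommL.
rewrite (powcommL _ _ _ hi) exprVn.
by [].
Qed.

Lemma comm_zpowR (u w wi : A) (r : C) : w * wi = 1 -> wi * w = 1 -> r != 0 ->
  w * u = r *: (u * w) -> forall i, zpow w wi i * u = r ^ i *: (u * zpow w wi i).
Proof.
move=> h1 h2 hr h.
have hi : wi * u = r^-1 *: (u * wi).
  have e : u * wi = r *: (wi * u).
    transitivity (wi * (w * u) * wi).
      by rewrite !mulrA h2 mul1r.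
    by rewrite h -scalerAr -scalerAl -!mulrA h1 mulr1.
  by rewrite e scalerA mulVf // scale1r.
case=> n /=.
  exact: powcommR.
rewrite (powcommR _ _ _ hi) exprVn.
by [].
Qed.

Lemma sum_shift (S U : seq (int * int)) (f : int * int -> C) (G : int * int -> A)
  (sh unsh : int * int -> int * int) :
  cancel sh unsh -> cancel unsh sh -> uniq S -> uniq U ->
  (forall p, p \notin S -> f p = 0) -> {subset map sh S <= U} ->
  \sum_(p <- S) f p *: G (sh p) = \sum_(p <- U) f (unsh p) *: G p.
Proof.
move=> shK unshK uS uU hf hsub.
rewrite [RHS](bigID (fun p => unsh p \in S)) /= [X in _ + X]big1 ?addr0; last first.
  by move=> p /hf ->; rewrite scale0r.
rewrite -[RHS]big_filter.
have hp : perm_eq (map sh S) [seq p <- U | unsh p \in S].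
  apply: uniq_perm; first by rewrite (map_inj_uniq (can_inj shK)).
    exact: filter_uniq.
  move=> p; rewrite mem_filter; apply/idP/idP.
    case/mapP=> p' Hp' ->; rewrite shK Hp' /= hsub //.
    by apply: map_f.
  by case/andP=> H _; rewrite -[p]unshK map_f.
rewrite -(perm_big _ hp) big_map.
by apply: eq_bigr => p _; rewrite shK.
Qed.

Lemma lin2 (U : seq (int * int)) (f g : int * int -> C) (G : int * int -> A) k1 k2 :
  k1 *: \sum_(p <- U) f p *: G p + k2 *: \sum_(p <- U) g p *: G p =
  \sum_(p <- U) (k1 * f p + k2 * g p) *: G p.
Proof.
rewrite !scaler_sumr -big_split; apply: eq_bigr => p _.
by rewrite !scalerA scalerDl.
Qed.

End Helpers.
Arguments zpowS {A u ui}.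
Arguments comm_zpowL {A u w wi r}.
Arguments comm_zpowR {A u w wi r}.
Arguments sum_shift {A S U f G sh unsh}.


Section Main.
Variables (A : algType C) (q : C) (x xi y yi : A).
Hypotheses (hq : q != 0) (hyx : y * x = q *: (x * y))
  (hxxi : x * xi = 1) (hxix : xi * x = 1) (hyyi : y * yi = 1) (hyiy : yi * y = 1)
  (lin : forall (s : seq (int * int)) (c : int * int -> C), uniq s ->
         \sum_(p <- s) c p *: mono x xi y yi p.1 p.2 = 0 ->
         forall p, p \in s -> c p = 0).

Let m (p : int * int) := mono x xi y yi p.1 p.2.

Lemma y_mono i j : y * mono x xi y yi i j = q ^ i *: mono x xi y yi i (j + 1).
Proof.
rewrite /mono mulrA (comm_zpowL hxxi hxix hq hyx) -scalerAl -mulrA.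
by rewrite -(proj2 (zpowS hyyi hyiy j)).
Qed.

Lemma mono_x i j : mono x xi y yi i j * x = q ^ j *: mono x xi y yi (i + 1) j.
Proof.
rewrite /mono -mulrA (comm_zpowR hyyi hyiy hq hyx) -scalerAr mulrA.
by rewrite -(proj1 (zpowS hxxi hxix i)).
Qed.

Lemma x_mono i j : x * mono x xi y yi i j = mono x xi y yi (i + 1) j.
Proof. by rewrite /mono mulrA -(proj2 (zpowS hxxi hxix i)). Qed.

Lemma mono_y i j : mono x xi y yi i j * y = mono x xi y yi i (j + 1).
Proof. by rewrite /mono -mulrA -(proj1 (zpowS hyyi hyiy j)). Qed.

Lemma coef_uniq (U : seq (int * int)) (f g : int * int -> C) : uniq U ->
  \sum_(p <- U) f p *: m p = \sum_(p <- U) g p *: m p ->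
  forall p, p \in U -> f p = g p.
Proof.
move=> uU E p hp.
have H0 : \sum_(p <- U) (f p - g p) *: mono x xi y yi p.1 p.2 = 0.
  rewrite (eq_bigr (fun p => f p *: m p - g p *: m p)); last first.
    by move=> p' _; rewrite scalerBl.
  by rewrite sumrB E subrr.
by apply/eqP; rewrite -subr_eq0; apply/eqP; exact: (lin _ _ uU H0 p hp).
Qed.

Lemma key (u v : A) (fa fb : int -> int -> C) (Sa Sb : seq (int * int))
  (k1 k2 k3 k4 : C) :
  expansion x xi y yi Sa fa u -> expansion x xi y yi Sb fb v ->
  k1 *: (y * u) + k2 *: (v * x) = k3 *: (x * v) + k4 *: (u * y) ->
  forall i j, k1 * (fa (i + 1) j * q ^ (i + 1)) + k2 * (fb i (j + 1) * q ^ (j + 1))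
    = k3 * fb i (j + 1) + k4 * fa (i + 1) j.
Proof.
case=> uSa za hu; case=> uSb zb hv h i j.
pose shA (p : int * int) := (p.1, p.2 + 1).
pose unshA (p : int * int) := (p.1, p.2 - 1).
pose shB (p : int * int) := (p.1 + 1, p.2).
pose unshB (p : int * int) := (p.1 - 1, p.2).
have cA : cancel shA unshA by case=> a b; rewrite /shA /unshA /= addrK.
have cA' : cancel unshA shA by case=> a b; rewrite /shA /unshA /= subrK.
have cB : cancel shB unshB by case=> a b; rewrite /shB /unshB /= addrK.
have cB' : cancel unshB shB by case=> a b; rewrite /shB /unshB /= subrK.
pose U := undup ((i + 1, j + 1) :: map shA Sa ++ map shB Sb).
have uU : uniq U := undup_uniq _.
have sA : {subset map shA Sa <= U}.
  by move=> p hp; rewrite mem_undup in_cons mem_cat hp orbT.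
have sB : {subset map shB Sb <= U}.
  by move=> p hp; rewrite mem_undup in_cons mem_cat hp !orbT.
have zA : forall p, p \notin Sa -> fa p.1 p.2 = 0 by case=> a b; exact: za.
have zB : forall p, p \notin Sb -> fb p.1 p.2 = 0 by case=> a b; exact: zb.
have zA' : forall p, p \notin Sa -> fa p.1 p.2 * q ^ p.1 = 0.
  by move=> p /zA ->; rewrite mul0r.
have zB' : forall p, p \notin Sb -> fb p.1 p.2 * q ^ p.2 = 0.
  by move=> p /zB ->; rewrite mul0r.
have e1 : y * u = \sum_(p <- U) (fa (unshA p).1 (unshA p).2 * q ^ (unshA p).1) *: m p.
  rewrite -(sum_shift cA cA' uSa uU zA' sA) hu mulr_sumr.
  by apply: eq_bigr => p _; rewrite -scalerAr y_mono scalerA.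
have e2 : v * x = \sum_(p <- U) (fb (unshB p).1 (unshB p).2 * q ^ (unshB p).2) *: m p.
  rewrite -(sum_shift cB cB' uSb uU zB' sB) hv mulr_suml.
  by apply: eq_bigr => p _; rewrite -scalerAl mono_x scalerA.
have e3 : x * v = \sum_(p <- U) (fb (unshB p).1 (unshB p).2) *: m p.
  rewrite -(sum_shift cB cB' uSb uU zB sB) hv mulr_sumr.
  by apply: eq_bigr => p _; rewrite -scalerAr x_mono.
have e4 : u * y = \sum_(p <- U) (fa (unshA p).1 (unshA p).2) *: m p.
  rewrite -(sum_shift cA cA' uSa uU zA sA) hu mulr_suml.
  by apply: eq_bigr => p _; rewrite -scalerAl mono_y.
rewrite e1 e2 e3 e4 !lin2 in h.
move: (coef_uniq _ _ _ uU h (i + 1, j + 1)).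
rewrite mem_undup mem_head => /(_ isT).
by rewrite /unshA /unshB /= !addrK.
Qed.

End Main.
Arguments key {A q x xi y yi}.

Theorem lemma5 (q : C) (A : algType C) (x xi y yi : A)
  (K Ki E F : {linear A -> A}) (alpha beta : C)
  (a b c d : int -> int -> C) (Sa Sb Sc Sd : seq (int * int)) :
  q != 0 -> (forall n : nat, (0 < n)%N -> q ^+ n != 1) ->
  is_quantum_torus q x xi y yi ->
  is_Uq_module_algebra q K Ki E F ->
  alpha != 0 -> beta != 0 ->
  K x = alpha *: x -> K y = beta *: y ->
  expansion x xi y yi Sa a (E x) -> expansion x xi y yi Sb b (E y) ->
  expansion x xi y yi Sc c (F x) -> expansion x xi y yi Sd d (F y) ->
  forall i j : int,
    a (i + 1) j * (q ^ i - beta) = b i (j + 1) * (1 - alpha * q ^ j) /\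
    c (i + 1) j * (1 - beta^-1 * q ^ i) = d i (j + 1) * (q ^ j - alpha^-1).
Proof.
move=> hq _ [hyx [hxxi hxix] [hyyi hyiy] lin _] [[_ hKiK _ _ _] _ [hE hF] _]
  ha hb hKx hKy ea eb ec ed i j.
have kq := key hq hyx hxxi hxix hyyi hyiy lin.
have hKix : Ki x = alpha^-1 *: x.
  have := hKiK x; rewrite hKx linearZ => h.
  by rewrite -{2}h scalerA mulVf // scale1r.
have hKiy : Ki y = beta^-1 *: y.
  have := hKiK y; rewrite hKy linearZ => h.
  by rewrite -{2}h scalerA mulVf // scale1r.
have qu : q \is a GRing.unit by rewrite unitfE.
have eqi : q ^ (i + 1) = q ^ i * q by rewrite exprzDr // expr1z.
have eqj : q ^ (j + 1) = q ^ j * q by rewrite exprzDr // expr1z.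
split.
  have h : 1 *: (y * E x) + alpha *: (E y * x) = q *: (x * E y) + (q * beta) *: (E x * y).
    have := hE y x; rewrite hyx linearZ hE hKx hKy => e.
    have e' : q *: (x * E y + E x * (beta *: y)) = y * E x + E y * (alpha *: x) by exact: e.
    by rewrite scale1r [alpha *: _]scalerAr -e' scalerDr -scalerAr scalerA.
  have := kq _ _ _ _ _ _ _ _ _ _ ea eb h i j.
  rewrite eqi eqj => H.
  apply: (mulIf hq).
  apply/eqP; rewrite -subr_eq0; apply/eqP.
  have -> : a (i + 1) j * (q ^ i - beta) * q - b i (j + 1) * (1 - alpha * q ^ j) * q
    = (1 * (a (i + 1) j * (q ^ i * q)) + alpha * (b i (j + 1) * (q ^ j * q)))
      - (q * b i (j + 1) + q * beta * a (i + 1) j) by ring.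
  by rewrite H subrr.
have h : beta^-1 *: (y * F x) + 1 *: (F y * x) = (q * alpha^-1) *: (x * F y) + q *: (F x * y).
  have := hF y x; rewrite hyx linearZ hF hKix hKiy => e.
  have e' : q *: (F x * y + (alpha^-1 *: x) * F y) = F y * x + (beta^-1 *: y) * F x by exact: e.
  by rewrite scale1r addrC [beta^-1 *: _]scalerAl -e' scalerDr -scalerAl scalerA addrC.
have := kq _ _ _ _ _ _ _ _ _ _ ec ed h i j.
rewrite eqi eqj => H.
apply: (mulIf hq).
apply/eqP; rewrite -subr_eq0; apply/eqP.
move: H; set bi := beta^-1; set ai := alpha^-1 => H.
have -> : c (i + 1) j * (1 - bi * q ^ i) * q - d i (j + 1) * (q ^ j - ai) * q
  = (q * ai * d i (j + 1) + q * c (i + 1) j)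
    - (bi * (c (i + 1) j * (q ^ i * q)) + 1 * (d i (j + 1) * (q ^ j * q))) by ring.
by rewrite H subrr.
Qed.
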